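(* Let $R$ be an integral domain with quotient field $K$. Let $B=\bigcup_{0\ne a\in R}R[[t/a]]$, the union taken inside $K((t))$, where $R[[t/a]]=\{\sum_{n\ge0}c_n(t/a)^n : c_n\in R\}$, and let $F=\operatorname{Quot}(B)\subseteq K((t))$. Then $F$ is separably closed in $K((t))$. *)

(* Defs.v *)
From HB Require Import structures.
From mathcomp Require Import all_boot all_order all_algebra all_field.
From Stdlib Require Import ClassicalEpsilon FunctionalExtensionality.
Set Implicit Arguments. Unset Strict Implicit. Unset Printing Implicit Defensive.
Import GRing.Theory.
Local Open Scope ring_scope.

Definition pb (P : Prop) : bool :=
  if excluded_middle_informative P then true else false.
Lemma pbP (P : Prop) : reflect P (pb P).
Proof. by rewrite /pb; case: excluded_middle_informative => h; constructor. Qed.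

Record pser (K : Type) := PSer { pcoef : nat -> K }.
Coercion pcoef : pser >-> Funclass.

Lemma pserP (K : Type) (f g : pser K) : (forall n, f n = g n) -> f = g.
Proof.
by case: f g => f [g] /= h; congr PSer; apply: functional_extensionality.
Qed.

Section Classical.
Variable K : Type.

Definition pser_eqb (f g : pser K) := pb (f = g).
Lemma pser_eqP : Equality.axiom pser_eqb.
Proof. by move=> f g; apply: pbP. Qed.
HB.instance Definition _ := hasDecEq.Build (pser K) pser_eqP.

Definition pser_find (P : pred (pser K)) (n : nat) : option (pser K) :=
  match excluded_middle_informative (exists x, P x) with
  | left H => Some (proj1_sig (constructive_indefinite_description _ H))
  | right _ => None
  end.
Lemma pser_find_correct P n x : pser_find P n = Some x -> P x.
Proof.
rewrite /pser_find; case: excluded_middle_informative => // H [<-].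
exact: proj2_sig (constructive_indefinite_description _ H).
Qed.
Lemma pser_find_complete (P : pred (pser K)) :
  (exists x, P x) -> exists n, pser_find P n.
Proof. by move=> H; exists 0%N; rewrite /pser_find; case: excluded_middle_informative. Qed.
Lemma pser_find_ext (P Q : pred (pser K)) : P =1 Q -> pser_find P =1 pser_find Q.
Proof.
move=> PQ; have -> : P = Q by apply: functional_extensionality.
by [].
Qed.
HB.instance Definition _ := hasChoice.Build (pser K)
  pser_find_correct pser_find_complete pser_find_ext.
End Classical.

Section Zmod.
Variable K : zmodType.
Definition pzero : pser K := PSer (fun _ => 0).
Definition popp (f : pser K) := PSer (fun n => - f n).
Definition padd (f g : pser K) := PSer (fun n => f n + g n).
Lemma paddA : associative padd.
Proof. by move=> f g h; apply: pserP => n /=; rewrite addrA. Qed.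
Lemma paddC : commutative padd.
Proof. by move=> f g; apply: pserP => n /=; rewrite addrC. Qed.
Lemma padd0 : left_id pzero padd.
Proof. by move=> f; apply: pserP => n /=; rewrite add0r. Qed.
Lemma paddN : left_inverse pzero popp padd.
Proof. by move=> f; apply: pserP => n /=; rewrite addNr. Qed.
HB.instance Definition _ := GRing.isZmodule.Build (pser K) paddA paddC padd0 paddN.
End Zmod.

Section Ring.
Variable K : comNzRingType.

Definition ptrunc (m : nat) (f : pser K) : {poly K} := \poly_(i < m) f i.
Lemma ptruncE m f j : (j < m)%N -> (ptrunc m f)`_j = f j.
Proof. by move=> hj; rewrite coef_poly hj. Qed.

Definition pmul (f g : pser K) : pser K :=
  PSer (fun n => (ptrunc n.+1 f * ptrunc n.+1 g)`_n).
Definition pone : pser K := PSer (fun n => (n == 0%N)%:R).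

Lemma coefM_low (p q p' q' : {poly K}) n :
  (forall j, (j <= n)%N -> p`_j = p'`_j) -> (forall j, (j <= n)%N -> q`_j = q'`_j) ->
  (p * q)`_n = (p' * q')`_n.
Proof.
move=> hp hq; rewrite !coefM; apply: eq_bigr => -[j hj] _ /=.
by rewrite hp ?hq // leq_subr.
Qed.

Lemma pmul_trunc m f g n : (n < m)%N -> (ptrunc m f * ptrunc m g)`_n = pmul f g n.
Proof.
move=> hn; rewrite /pmul /=; apply: coefM_low => j hj.
  by rewrite !ptruncE // (leq_ltn_trans hj).
by rewrite !ptruncE // (leq_ltn_trans hj).
Qed.

Lemma ptrunc_mul m f g j : (j < m)%N ->
  (ptrunc m (pmul f g))`_j = (ptrunc m f * ptrunc m g)`_j.
Proof. by move=> hj; rewrite ptruncE // pmul_trunc. Qed.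

Lemma pmulA : associative pmul.
Proof.
move=> f g h; apply: pserP => n.
rewrite -(pmul_trunc _ _ (ltnSn n)) -[RHS](pmul_trunc _ _ (ltnSn n)).
rewrite (@coefM_low _ _ (ptrunc n.+1 f) (ptrunc n.+1 g * ptrunc n.+1 h) n) //; last first.
  by move=> j hj; rewrite ptrunc_mul.
rewrite mulrA; apply: coefM_low => // j hj.
by rewrite ptrunc_mul.
Qed.

Lemma pmulC : commutative pmul.
Proof. by move=> f g; apply: pserP => n; rewrite /pmul /= mulrC. Qed.

Lemma ptrunc_one m : (0 < m)%N -> ptrunc m pone = 1.
Proof.
move=> hm; apply/polyP => j; rewrite coef_poly coef1 /=.
case: j => [|j]; first by rewrite hm.
by case: ifP.
Qed.

Lemma pmul1 : left_id pone pmul.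
Proof. by move=> f; apply: pserP => n; rewrite /pmul /= ptrunc_one // mul1r ptruncE. Qed.

Lemma ptrunc_add m f g : ptrunc m (padd f g) = ptrunc m f + ptrunc m g.
Proof. by apply/polyP => j; rewrite coefD !coef_poly; case: ifP; rewrite ?addr0. Qed.

Lemma pmulDl : left_distributive pmul (@padd K).
Proof.
by move=> f g h; apply: pserP => n; rewrite /pmul /= ptrunc_add mulrDl coefD.
Qed.

Lemma pone_neq0 : pone != (pzero K).
Proof.
apply/eqP => /(congr1 (fun f : pser K => f 0%N)) /= /eqP; by rewrite oner_eq0.
Qed.

HB.instance Definition _ :=
  GRing.Zmodule_isComNzRing.Build (pser K) pmulA pmulC pmul1 pmulDl pone_neq0.

Definition punit : {pred pser K} := fun x => pb (exists y, y * x = 1).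
Definition pinv (x : pser K) : pser K :=
  match excluded_middle_informative (exists y, y * x = 1) with
  | left H => proj1_sig (constructive_indefinite_description _ H)
  | right _ => x
  end.
Lemma pmulV : {in punit, left_inverse 1 pinv *%R}.
Proof.
move=> x /pbP Hx; rewrite /pinv; case: excluded_middle_informative => [H|/(_ Hx)[]].
exact: proj2_sig (constructive_indefinite_description _ H).
Qed.
Lemma punitPl x y : y * x = 1 -> punit x.
Proof. by move=> h; apply/pbP; exists y. Qed.
Lemma pinv_out : {in [predC punit], pinv =1 id}.
Proof.
move=> x; rewrite inE => /negP hx; rewrite /pinv.
case: excluded_middle_informative => // H; by case: hx; apply/pbP.
Qed.
HB.instance Definition _ :=
  GRing.ComNzRing_hasMulInverse.Build (pser K) pmulV punitPl pinv_out.
End Ring.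

Section Idomain.
Variable K : idomainType.

Lemma pser_neq0 (f : pser K) : f != 0 -> exists n, f n != 0.
Proof.
move=> hf; case: (pbP (exists n, f n != 0)) => // H.
case/negP: hf; apply/eqP/pserP => n /=; apply/eqP/negPn/negP => h; apply: H.
by exists n.
Qed.

Lemma pmul_eq0 : GRing.integral_domain_axiom (pser K).
Proof.
move=> f g hfg; apply/norP => -[/pser_neq0 hf /pser_neq0 hg].
case: (ex_minnP hf) => a fa amin; case: (ex_minnP hg) => b gb bmin.
have : pmul f g (a + b)%N = 0 by change (pmul f g = pzero K) in hfg; rewrite hfg.
have hab : (a < (a + b)%N.+1)%N by rewrite ltnS leq_addr.
rewrite -(pmul_trunc _ _ (ltnSn _)) coefM (bigD1 (Ordinal hab)) //= big1.
  rewrite addr0 !ptruncE ?addKn // ?ltnS ?leq_subr ?leq_addl //.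
  by move/eqP; rewrite mulf_eq0 (negbTE fa) (negbTE gb).
move=> [j hj] /= hja; change ((a+b)%N.+1) with (a+b).+1%N in hj; rewrite !ptruncE ?ltnS ?leq_subr //.
have [ja|aj] := ltnP j a.
  have -> : f j = 0 by apply/eqP/negPn/negP => /amin; rewrite leqNgt ja.
  by rewrite mul0r.
have {}aj : (a < j)%N by rewrite ltn_neqAle eq_sym aj andbT; exact: hja.
have -> : g (a + b - j)%N = 0.
  apply/eqP/negPn/negP => /bmin; rewrite leqNgt; case/negP.
  have hja' : (j <= a + b)%N by rewrite -ltnS.
  by rewrite ltn_subLR // ltn_add2r.
by rewrite mulr0.
Qed.
HB.instance Definition _ := GRing.ComUnitRing_isIntegral.Build (pser K) pmul_eq0.
End Idomain.

(* R : integral domain, K = Quot(R) = {fraction R}, elements of R embedded   *)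
(* in K by r%:F.  K[[t]] = pser K, and K((t)) = Quot(K[[t]]).                *)
Notation "x %:F" := (@FracField.tofrac _ x) : ring_scope.

Definition laurent (K : idomainType) := {fraction (pser K)}.

Definition in_Rta (R : idomainType) (a : R) (f : pser {fraction R}) : Prop :=
  exists c : nat -> R, forall n, f n = (c n)%:F / (a%:F) ^+ n.

Definition in_B (R : idomainType) (f : pser {fraction R}) : Prop :=
  exists a : R, a != 0 /\ in_Rta a f.

Definition in_F (R : idomainType) (x : laurent {fraction R}) : Prop :=
  exists b1 b2 : pser {fraction R},
    [/\ in_B b1, in_B b2, b2 != 0 & x = b1%:F / b2%:F].

Definition separable_over (L : fieldType) (S : L -> Prop) (x : L) : Prop :=
  exists p : {poly L}, [/\ forall i, S p`_i, separable_poly p & root p x].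

Definition separably_closed_in (L : fieldType) (S : L -> Prop) : Prop :=
  forall x : L, separable_over S x -> S x.

(* Main.v *)
Require Import Defs.
From HB Require Import structures.
From mathcomp Require Import all_boot all_order all_algebra all_field.
From Stdlib Require Import ClassicalEpsilon FunctionalExtensionality.
From mathcomp Require Import ring zify.
Set Implicit Arguments. Unset Strict Implicit. Unset Printing Implicit Defensive.
Import GRing.Theory.
Local Open Scope ring_scope.
Section PSer.
Variable K : fieldType.
Implicit Types f g h : pser K.
Lemma pmulE f g n : (f * g) n = \sum_(i < n.+1) f i * g (n - i)%N.
Proof.
rewrite /GRing.mul /= /pmul /= coefM; apply: eq_bigr => -[i hi] _ /=.
by rewrite !ptruncE // ltnS ?leq_subr // -ltnS.
Qed.
Lemma paddE f g n : (f + g) n = f n + g n. Proof. by []. Qed.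
Lemma poppE f n : (- f) n = - f n. Proof. by []. Qed.
Lemma psubE f g n : (f - g) n = f n - g n. Proof. by []. Qed.
Lemma p0E n : (0 : pser K) n = 0. Proof. by []. Qed.
Lemma p1E n : (1 : pser K) n = (n == 0%N)%:R. Proof. by []. Qed.
Lemma psumE I (r : seq I) (P : pred I) (F : I -> pser K) n :
  (\sum_(i <- r | P i) F i) n = \sum_(i <- r | P i) F i n.
Proof. by elim/big_rec2: _ => // i y1 y2 _ <-. Qed.

Definition cs (c : K) : pser K := PSer (fun n => if n == 0%N then c else 0).
Lemma csME c f n : (cs c * f) n = c * f n.
Proof.
rewrite pmulE big_ord_recl /= subn0 big1 ?addr0 // => i _.
by rewrite /= mul0r.
Qed.
Lemma csE c n : cs c n = if n == 0%N then c else 0. Proof. by []. Qed.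
Lemma cs1 : cs 1 = 1.
Proof. by apply: pserP => n; rewrite csE p1E; case: (n == 0%N). Qed.
Lemma csM a b : cs (a * b) = cs a * cs b.
Proof. by apply: pserP => n; rewrite csME !csE; case: (n == 0%N); rewrite ?mulr0. Qed.
Lemma csX a k : cs (a ^+ k) = cs a ^+ k.
Proof. by elim: k => [|k IH]; rewrite ?cs1 // !exprS csM IH. Qed.

Definition tt : pser K := PSer (fun n => (n == 1%N)%:R).
Lemma ttME f n : (tt * f) n = if n is n'.+1 then f n' else 0.
Proof.
case: n => [|n].
  by rewrite pmulE big_ord1 /= mul0r.
rewrite pmulE big_ord_recl /= mul0r add0r big_ord_recl /= mul1r subSS subn0.
rewrite big1 ?addr0 // => i _ /=; by rewrite mul0r.
Qed.
Lemma ttXME k f n : (tt ^+ k * f) n = if (n < k)%N then 0 else f (n - k)%N.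
Proof.
elim: k f n => [|k IH] f n; first by rewrite expr0 mul1r subn0.
rewrite exprSr -mulrA IH; case: ltnP => hn.
  by rewrite ltnW.
rewrite ttME; have [->|hnk] := eqVneq n k; first by rewrite subnn ltnSn.
have hk : (k < n)%N by rewrite ltn_neqAle eq_sym hnk hn.
by rewrite ltnNge hk /= -(subnSK hk).
Qed.
Lemma ttX_neq0 k : tt ^+ k != 0.
Proof.
apply/eqP => /(congr1 (fun f : pser K => (f * 1) k)).
by rewrite ttXME ltnn subnn mul0r p1E p0E eqxx => /eqP; rewrite oner_eq0.
Qed.

Definition sh k f : pser K := PSer (fun n => f (n + k)%N).
Definition tr k f : pser K := PSer (fun n => if (n < k)%N then f n else 0).
Lemma shE k f n : sh k f n = f (n + k)%N. Proof. by []. Qed.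
Lemma trE k f n : tr k f n = if (n < k)%N then f n else 0. Proof. by []. Qed.
Lemma tr_sh k f : f = tr k f + tt ^+ k * sh k f.
Proof.
apply: pserP => n; rewrite paddE ttXME trE; case: ltnP => hn.
  by rewrite addr0.
by rewrite add0r shE subnK.
Qed.
Lemma sh_ttX k g : sh k (tt ^+ k * g) = g.
Proof. by apply: pserP => n; rewrite shE ttXME ltnNge leq_addl /= addnK. Qed.
Lemma trS k f : tr k.+1 f = tr k f + cs (f k) * tt ^+ k.
Proof.
apply: pserP => n; rewrite paddE mulrC ttXME csE !trE.
case: (ltngtP n k) => [h|h|->].
- by rewrite ltnS (ltnW h) addr0.
- by rewrite ltnS leqNgt h /= subn_eq0 leqNgt h add0r.
- by rewrite ltnSn subnn eqxx add0r.
Qed.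

Definition lowk k f := forall n, (n < k)%N -> f n = 0.
Lemma lowk_mulr k f g : lowk k f -> lowk k (f * g).
Proof.
move=> hf n hn; rewrite pmulE big1 // => -[i hi] _ /=.
by rewrite hf ?mul0r // (leq_ltn_trans _ hn) // -ltnS.
Qed.
Lemma lowk_mull k f g : lowk k f -> lowk k (g * f).
Proof. by rewrite mulrC; apply: lowk_mulr. Qed.
Lemma lowk_add k f g : lowk k f -> lowk k g -> lowk k (f + g).
Proof. by move=> hf hg n hn; rewrite paddE hf ?hg ?addr0. Qed.
Lemma lowk_sum k I (r : seq I) (P : pred I) (F : I -> pser K) :
  (forall i, P i -> lowk k (F i)) -> lowk k (\sum_(i <- r | P i) F i).
Proof.
move=> h; elim/big_rec: _ => [n _|i x Pi hx]; first by [].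
exact: lowk_add (h _ Pi) hx.
Qed.
Lemma lowk_ttX k g : lowk k (tt ^+ k * g).
Proof. by move=> n hn; rewrite ttXME hn. Qed.
Lemma lowk_le k l f : (l <= k)%N -> lowk k f -> lowk l f.
Proof. by move=> hl hf n hn; apply: hf; apply: leq_trans hl. Qed.
Lemma lowkE k f : lowk k f -> f = tt ^+ k * sh k f.
Proof.
move=> hf; rewrite {1}(tr_sh k f).
have -> : tr k f = 0 by apply: pserP => n; rewrite trE; case: ifP => // /hf.
by rewrite add0r.
Qed.

Section Inv.
Variable w : pser K.
Fixpoint invs (n : nat) : seq K :=
  if n is n'.+1 then
    let s := invs n' in
    rcons s ((w 0%N)^-1 * ((n' == 0%N)%:R -
       \sum_(i < n') w i.+1 * nth 0 s (n' - i.+1)%N))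
  else [::].
Lemma size_invs n : size (invs n) = n.
Proof. by elim: n => //= n IH; rewrite size_rcons IH. Qed.
Lemma nth_invs k n m : (k < n)%N -> (n <= m)%N -> nth 0 (invs m) k = nth 0 (invs n) k.
Proof.
move=> hk; elim: m => [|m IH]; first by rewrite leqn0 => /eqP ->.
rewrite leq_eqVlt => /orP [/eqP -> //|]; rewrite ltnS => hnm.
by rewrite /= nth_rcons size_invs (leq_trans hk hnm) IH.
Qed.
Definition pinvs : pser K := PSer (fun n => nth 0 (invs n.+1) n).
Lemma pinvsK : w 0%N != 0 -> pinvs * w = 1.
Proof.
move=> w0; apply: pserP => n; rewrite mulrC pmulE big_ord_recl /= subn0.
rewrite /pinvs /= nth_rcons size_invs ltnn eqxx mulrA mulfV // mul1r.
set S1 := \sum_(i < n) _; set S2 := \sum_(i < n) _.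
suff -> : S2 = S1 by rewrite subrK.
apply: eq_bigr => -[i hi] _ /=; congr (_ * _).
have -> : rcons (invs (n - i.+1))
        ((w 0%N)^-1 *
         (((n - i.+1)%N == 0%N)%:R -
          \sum_(i0 < n - i.+1)
             w i0.+1 * (invs (n - i.+1))`_(n - i.+1 - i0.+1))) = invs (n - i.+1).+1 by [].
symmetry; apply: nth_invs => //; rewrite (leq_trans _ (leq_subr i n)) // subnSK //.
Qed.
End Inv.
End PSer.
Section Bnd.
Variable R : idomainType.
Local Notation K := {fraction R}.
Implicit Types f g : pser K.

Lemma frac_rep (T : idomainType) (x : {fraction T}) :
  exists n d : T, d != 0 /\ x = n%:F / d%:F.
Proof.
elim/quotW: x => r.
have dr : (r : T * T).2 != 0 by case: r.
exists (r : T * T).1, (r : T * T).2; split => //.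
apply: (canRL (mulfK _)); first by rewrite tofrac_eq0.
rewrite !piE; apply/eqmodP => /=; rewrite FracField.equivfE /FracField.mulf /=.
rewrite !numden_Ratio ?oner_eq0 ?mulf_neq0 //.
  by rewrite !mulr1 mulrC.
all: by rewrite oner_eq0.
Qed.

Definition inR (y : K) := exists r : R, y = r%:F.
Lemma inRF r : inR r%:F. Proof. by exists r. Qed.
Lemma inR0 : inR 0. Proof. by exists 0; rewrite tofrac0. Qed.
Lemma inR1 : inR 1. Proof. by exists 1; rewrite tofrac1. Qed.
Lemma inRD x y : inR x -> inR y -> inR (x + y).
Proof. by move=> [a ->] [b ->]; exists (a + b); rewrite tofracD. Qed.
Lemma inRN x : inR x -> inR (- x).
Proof. by move=> [a ->]; exists (- a); rewrite tofracN. Qed.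
Lemma inRM x y : inR x -> inR y -> inR (x * y).
Proof. by move=> [a ->] [b ->]; exists (a * b); rewrite tofracM. Qed.
Lemma inRX x k : inR x -> inR (x ^+ k).
Proof. by move=> [a ->]; exists (a ^+ k); rewrite tofracXn. Qed.
Lemma inR_sum I (r : seq I) (P : pred I) (F : I -> K) :
  (forall i, P i -> inR (F i)) -> inR (\sum_(i <- r | P i) F i).
Proof.
move=> h; elim/big_rec: _ => [|i x Pi hx]; first exact: inR0.
exact: inRD (h _ Pi) hx.
Qed.
Lemma inR_eq x y : x = y -> inR x -> inR y. Proof. by move=> ->. Qed.

Definition BndW (d a : R) f := forall n, inR (d%:F * a%:F ^+ n * f n).
Definition Bnd f := exists d a : R, [/\ d != 0, a != 0 & BndW d a f].

Lemma BndW_widen d a d' a' f : BndW d a f -> BndW (d * d') (a * a') f.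
Proof.
move=> h n; apply: (inR_eq _ (inRM (inRM (inRF d') (inRF (a' ^+ n))) (h n))).
rewrite !tofracM tofracXn exprMn; ring.
Qed.

Lemma Bnd_add f g : Bnd f -> Bnd g -> Bnd (f + g).
Proof.
move=> [d1 [a1 [d10 a10 h1]]] [d2 [a2 [d20 a20 h2]]].
exists (d1 * d2), (a1 * a2); split; rewrite ?mulf_neq0 //.
move=> n; rewrite paddE mulrDr; apply: inRD.
  exact: BndW_widen h1 n.
rewrite [d1 * d2]mulrC [a1 * a2]mulrC; exact: BndW_widen h2 n.
Qed.
Lemma Bnd_opp f : Bnd f -> Bnd (- f).
Proof.
move=> [d [a [d0 a0 h]]]; exists d, a; split => // n.
by rewrite poppE mulrN; apply: inRN.
Qed.
Lemma Bnd_mul f g : Bnd f -> Bnd g -> Bnd (f * g).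
Proof.
move=> [d1 [a1 [d10 a10 h1]]] [d2 [a2 [d20 a20 h2]]].
exists (d1 * d2), (a1 * a2); split; rewrite ?mulf_neq0 //.
move=> n; rewrite pmulE mulr_sumr; apply: inR_sum => -[i hi] _ /=.
have e : (d1 * d2)%:F * (a1 * a2)%:F ^+ n * (f i * g (n - i)%N) =
  (d1%:F * a1%:F ^+ i * f i) * (d2%:F * a2%:F ^+ (n - i)%N * g (n - i)%N)
   * (a1%:F ^+ (n - i)%N * a2%:F ^+ i).
  have -> : n = (i + (n - i))%N by rewrite subnKC // -ltnS.
  rewrite addKn !tofracM exprMn !exprD; ring.
rewrite e; apply: inRM; first exact: inRM (h1 _) (h2 _).
by apply: inRM; apply: inRX; apply: inRF.
Qed.
Lemma Bnd_cs c : Bnd (cs c).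
Proof.
have [u [v [v0 ->]]] := frac_rep c.
exists v, 1; split; rewrite ?oner_eq0 // => n; rewrite csE tofrac1 expr1n mulr1.
case: (n == 0%N); last by rewrite mulr0; apply: inR0.
by rewrite mulrC divfK ?tofrac_eq0 //; apply: inRF.
Qed.
Lemma Bnd_tt : Bnd (tt K).
Proof.
exists 1, 1; split; rewrite ?oner_eq0 // => n; rewrite tofrac1 expr1n !mul1r /=.
case: (n == 1%N); [exact: inR1 | exact: inR0].
Qed.
Lemma Bnd_sh k f : Bnd f -> Bnd (sh k f).
Proof.
move=> [d [a [d0 a0 h]]]; exists (d * a ^+ k), a; split; rewrite ?mulf_neq0 ?expf_neq0 //.
move=> n; rewrite shE; apply: (inR_eq _ (h (n + k)%N)).
by rewrite tofracM tofracXn exprD; ring.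
Qed.
Lemma Bnd_sum I (r : seq I) (P : pred I) (F : I -> pser K) :
  (forall i, P i -> Bnd (F i)) -> Bnd (\sum_(i <- r | P i) F i).
Proof.
move=> h; elim/big_rec: _ => [|i x Pi hx]; last exact: Bnd_add (h _ Pi) hx.
exists 1, 1; split; rewrite ?oner_eq0 // => n; rewrite p0E mulr0; exact: inR0.
Qed.
Lemma Bnd_X f k : Bnd f -> Bnd (f ^+ k).
Proof.
move=> h; elim: k => [|k IH]; first by rewrite expr0 -cs1; apply: Bnd_cs.
by rewrite exprS; apply: Bnd_mul.
Qed.
Lemma Bnd_tr k f : Bnd (tr k f).
Proof.
elim: k => [|k IH].
  have -> : tr 0 f = cs 0 by apply: pserP => n; rewrite trE csE; case: (n == 0%N).
  exact: Bnd_cs.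
rewrite trS; apply: Bnd_add => //; apply: Bnd_mul; first exact: Bnd_cs.
exact/Bnd_X/Bnd_tt.
Qed.

Definition BndP : {pred pser K} := fun f => pb (Bnd f).
Lemma BndPE f : (f \in BndP) = pb (Bnd f). Proof. by []. Qed.
Lemma BndP_subring : subring_closed BndP.
Proof.
split.
- by rewrite BndPE; apply/pbP; rewrite -cs1; apply: Bnd_cs.
- move=> f g; rewrite !BndPE => /pbP hf /pbP hg; apply/pbP.
  by apply: Bnd_add => //; apply: Bnd_opp.
- move=> f g; rewrite !BndPE => /pbP hf /pbP hg; apply/pbP.
  by apply: Bnd_mul.
Qed.
HB.instance Definition _ := GRing.isSubringClosed.Build (pser K) BndP BndP_subring.

Lemma Bnd_list J (T : nat -> pser K) : (forall j, (j < J)%N -> Bnd (T j)) ->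
  exists d a : R, [/\ d != 0, a != 0 & forall j, (j < J)%N -> BndW d a (T j)].
Proof.
elim: J => [|J IH] h.
  by exists 1, 1; split; rewrite ?oner_eq0.
have [d [a [d0 a0 hT]]] := IH (fun j hj => h j (ltnW hj)).
have [d' [a' [d0' a0' hJ]]] := h J (ltnSn J).
exists (d * d'), (a * a'); split; rewrite ?mulf_neq0 // => j; rewrite ltnS leq_eqVlt.
case/orP => [/eqP ->|hj]; last exact: BndW_widen (hT j hj).
rewrite [d * d']mulrC [a * a']mulrC; exact: BndW_widen.
Qed.
End Bnd.
Section Core.
Variable R : idomainType.
Local Notation K := {fraction R}.
Implicit Types f g w : pser K.

Lemma pow_bnd (b : R) w n : (forall k, (k < n)%N -> inR (b%:F ^+ k * w k)) ->
  forall j l, (l < n)%N -> inR (b%:F ^+ l * (w ^+ j) l).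
Proof.
move=> h; elim=> [|j IH] l hl.
  rewrite expr0 p1E; case: (l == 0%N); rewrite ?mulr1 ?mulr0.
    by apply: inRX; apply: inRF.
  exact: inR0.
rewrite exprSr pmulE mulr_sumr; apply: inR_sum => -[i hi] _ /=.
have hil : (i <= l)%N by rewrite -ltnS.
have e : b%:F ^+ l * ((w ^+ j) i * w (l - i)%N) =
   (b%:F ^+ i * (w ^+ j) i) * (b%:F ^+ (l - i)%N * w (l - i)%N).
  by rewrite -{1}(subnKC hil) exprD; ring.
rewrite e; apply: inRM; first by apply: IH; apply: leq_ltn_trans hl.
by apply: h; apply: leq_ltn_trans (leq_subr _ _) hl.
Qed.

Lemma core_inner (U : nat -> pser K) (J : nat) (w : pser K) (b : R) :
  (1 < J)%N ->
  \sum_(j < J) U j * w ^+ j = 0 ->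
  (U 1%N) 0%N != 0 ->
  (forall j, (1 < j)%N -> U j 0%N = 0) ->
  inR ((U 0%N) 0%N / (U 1%N) 0%N) ->
  (forall j i, (j < J)%N -> (0 < i)%N -> inR (b%:F ^+ i * (U j) i / (U 1%N) 0%N)) ->
  forall n, inR (b%:F ^+ n * w n).
Proof.
move=> J1 hsum e0 hj2 h00 hb.
elim/ltn_ind => n IH.
have hpow := pow_bnd IH.
have := congr1 (fun f : pser K => f n) hsum; rewrite psumE p0E.
under eq_bigr do rewrite pmulE big_ord_recl.
rewrite big_split /= (bigD1 (Ordinal J1)) //= expr1.
set A := \sum_(j < J | j != Ordinal J1) _.
set C := \sum_(j < J) _.
move=> eq0; rewrite subn0 in eq0.
have -> : w n = - (A + C) / (U 1%N) 0%N.
  apply: (canRL (mulfK e0)); rewrite mulrC; apply/eqP.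
  by rewrite -addr_eq0 addrA eq0.
have -> : b%:F ^+ n * (- (A + C) / (U 1%N) 0%N) =
   - ((b%:F ^+ n / (U 1%N) 0%N) * A + (b%:F ^+ n / (U 1%N) 0%N) * C).
  by rewrite -mulrDr mulNr mulrN mulrA mulrAC.
apply: inRN; apply: inRD; rewrite mulr_sumr; apply: inR_sum => -[j hj] /= hj1.
  case: j hj hj1 => [|j] hj hj1.
    rewrite expr0 p1E subn0; case: eqP => [->|_].
      by rewrite expr0 mulr1 mul1r mulrC.
    by rewrite mulr0 mulr0; apply: inR0.
  case: j hj hj1 => [|j] hj hj1; first by case/eqP: hj1; apply: val_inj.
  by rewrite (hj2 j.+2) // mul0r mulr0; apply: inR0.
rewrite mulr_sumr; apply: inR_sum => -[i hi] _ /=.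
have hin : (i.+1 <= n)%N by [].
have e : b%:F ^+ n / (U 1%N) 0%N * (U j i.+1 * (w ^+ j) (n - i.+1)%N) =
  (b%:F ^+ i.+1 * U j i.+1 / (U 1%N) 0%N) * (b%:F ^+ (n - i.+1)%N * (w ^+ j) (n - i.+1)%N).
  by rewrite -{1}(subnKC hin) exprD; ring.
rewrite e; apply: inRM; first exact: hb.
by apply: hpow; rewrite subnSK // leq_subr.
Qed.
End Core.
Section Core2.
Variable R : idomainType.
Local Notation K := {fraction R}.

Lemma core (T : nat -> pser K) (J : nat) (z : pser K) :
  (1 < J)%N -> \sum_(j < J) T j * z ^+ j = 0 -> T 1%N 0%N != 0 ->
  (forall j, (1 < j)%N -> T j 0%N = 0) ->
  (forall j, (j < J)%N -> Bnd (T j)) -> Bnd z.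
Proof.
move=> J1 hsum e0 hj2 hB.
have [d [a [d0 a0 hW]]] := Bnd_list hB.
have [nn [dd [dd0 hinv]]] := frac_rep (T 1%N 0%N)^-1.
set s := d * dd.
have s0 : s != 0 by rewrite mulf_neq0.
have sF0 : s%:F != 0 by rewrite tofrac_eq0.
pose U j := cs (s%:F * s%:F^-1 ^+ j) * T j.
pose w := cs s%:F * z.
have hU0 j n : U j n = s%:F * s%:F^-1 ^+ j * T j n by rewrite /U csME.
have U10 : U 1%N 0%N = T 1%N 0%N by rewrite hU0 expr1 mulfV // mul1r.
have hsumU : \sum_(j < J) U j * w ^+ j = 0.
  have -> : \sum_(j < J) U j * w ^+ j = cs s%:F * \sum_(j < J) T j * z ^+ j.
    rewrite mulr_sumr; apply: eq_bigr => j _.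
    rewrite /U /w exprMn -csX.
    have -> : forall (c e : K) (T' Z : pser K), cs c * T' * (cs e * Z) = cs (c * e) * (T' * Z).
      by move=> c e T' Z; rewrite csM; ring.
    by rewrite exprVn -mulrA mulVf ?expf_neq0 // mulr1.
  by rewrite hsum mulr0.
pose b := a * s ^+ J.
have hw := @core_inner R U J w b J1 hsumU.
have b0 : b != 0 by rewrite mulf_neq0 ?expf_neq0.
have hwn : forall n, inR (b%:F ^+ n * w n).
  apply: hw.
  - by rewrite U10.
  - by move=> j hj; rewrite hU0 hj2 // mulr0.
  - rewrite U10 hU0 expr0 mulr1 hinv.
    have := hW 0%N (ltnW J1) 0%N; rewrite expr0 mulr1 => -[r hr].
    apply: (inR_eq _ (inRM (inRF nn) (inRF r))).
    rewrite -hr /s tofracM.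
    have dd0' : dd%:F != 0 by rewrite tofrac_eq0.
    symmetry; transitivity (nn%:F / dd%:F * dd%:F * (d%:F * T 0%N 0%N)); first by ring.
    by rewrite divfK.
  - move=> j i hj hi; rewrite U10 hU0 hinv.
    have hji : (j <= J * i)%N by rewrite (leq_trans (ltnW hj)) // leq_pmulr.
    have [r hr] := hW j hj i.
    have [k hk] : exists k, (J * i = j + k)%N by exists (J * i - j)%N; rewrite subnKC.
    apply: (inR_eq _ (inRM (inRM (inRF nn) (inRF r)) (inRF (s ^+ k)))).
    rewrite -hr /b tofracM !tofracXn exprMn -exprM hk exprD.
    have dd0' : dd%:F != 0 by rewrite tofrac_eq0.
    symmetry; transitivity ((s%:F ^+ j * s%:F^-1 ^+ j) * (s%:F / dd%:F) *
       (nn%:F * a%:F ^+ i * T j i * s%:F ^+ k)); first by ring.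
    rewrite exprVn mulfV ?expf_neq0 // mul1r /s tofracM mulfK //.
    ring.
have hBw : Bnd w.
  exists 1, b; split; rewrite ?oner_eq0 // => n; rewrite tofrac1 mul1r; exact: hwn n.
have -> : z = cs s%:F^-1 * w by rewrite /w mulrA -csM mulVf // cs1 mul1r.
by apply: Bnd_mul => //; apply: Bnd_cs.
Qed.
End Core2.
Section Hensel.
Variable R : idomainType.
Local Notation K := {fraction R}.

Lemma lowk_opp k (f : pser K) : lowk k f -> lowk k (- f).
Proof. by move=> hf n hn; rewrite poppE hf ?oppr0. Qed.

Lemma horner_diff (T : comNzRingType) (p : {poly T}) (a b : T) :
  exists q, p.[a] - p.[b] = (a - b) * q.
Proof.
have : root (p - p.[b]%:P) b by rewrite /root hornerD hornerN hornerC subrr.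
case/factor_theorem => q hq; exists q.[a].
have := congr1 (fun r => r.[a]) hq; rewrite /= hornerD hornerN hornerC hornerM hornerXsubC.
by move=> ->; rewrite mulrC.
Qed.

Lemma BndPP (f : pser K) : f \in (@BndP R) -> Bnd f.
Proof. by rewrite BndPE => /pbP. Qed.
Lemma BndPI (f : pser K) : Bnd f -> f \in (@BndP R).
Proof. by move=> h; rewrite BndPE; apply/pbP. Qed.

Lemma hensel (P0 : {poly pser K}) (y : pser K) : P0 \is a polyOver (@BndP R) ->
  P0.[y] = 0 -> P0^`().[y] != 0 -> Bnd y.
Proof.
move=> hP0 hy hdy.
set G := P0^`().[y].
have [m Gm mmin] := ex_minnP (pser_neq0 hdy).
set N := m.+1; set k := (N + m)%N.
set yN := tr N y; set z := sh N y; set h := tt K ^+ N.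
have ey : y = yN + h * z by exact: tr_sh.
set G' := P0^`().[yN].
have GG' : forall n, (n < N)%N -> G' n = G n.
  move=> n hn; have [q hq] := horner_diff (P0^`()) y yN.
  have : lowk N (G - G').
    rewrite /G /G' hq {1}ey addrC addKr /h -mulrA; exact: lowk_ttX.
  by move/(_ n hn); rewrite psubE => /eqP; rewrite subr_eq0 => /eqP.
have G'm : G' m != 0 by rewrite GG'.
have G'low : forall n, (n < m)%N -> G' n = 0.
  move=> n hn; rewrite GG' ?(ltn_trans hn) //.
  by apply/eqP/negPn/negP => /mmin; rewrite leqNgt hn.
set Q1 := P0 \Po ('X + yN%:P).
have hQ1 : Q1 \is a polyOver (@BndP R).
  apply: polyOver_comp => //; rewrite polyOverXaddC; apply: BndPI; exact: Bnd_tr.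
have Q1hz : Q1.[h * z] = 0 by rewrite horner_comp hornerD hornerX hornerC addrC -ey.
have Q11 : Q1`_1 = G'.
  have : (Q1^`())`_0 = Q1`_1 by rewrite coef_deriv.
  move <-; rewrite -horner_coef0 /Q1 deriv_comp derivD derivX derivC addr0 mulr1.
  by rewrite horner_comp hornerD hornerX hornerC add0r.
set J := size Q1.
have J1 : (1 < J)%N.
  rewrite ltnNge; apply/negP => hJ; move: G'm; rewrite -Q11 nth_default //.
  by rewrite eqxx.
have hsum : \sum_(j < J) Q1`_j * h ^+ j * z ^+ j = 0.
  rewrite -[RHS]Q1hz horner_coef; apply: eq_bigr => j _; by rewrite exprMn mulrA.
have lowj : forall j, (0 < j)%N -> lowk k (Q1`_j * h ^+ j).
  move=> [|[|j]] // _.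
    rewrite Q11 expr1 mulrC => n hn; rewrite ttXME; case: ltnP => // hNn.
    by apply: G'low; rewrite ltn_subLR.
  rewrite mulrC /h -exprM => n hn; rewrite ttXME ifT //.
  by apply: (leq_trans hn); rewrite /k /N; nia.
have low0 : lowk k (Q1`_0 * h ^+ 0).
  have hJ : J = (J - 1).+1 by rewrite subn1 prednK // ltnW.
  move: hsum; rewrite hJ big_ord_recl /= expr0 mulr1 => /eqP; rewrite addr_eq0 => /eqP ->.
  apply: lowk_opp; apply: lowk_sum => j _; apply: lowk_mulr; exact: lowj.
have lowall : forall j, lowk k (Q1`_j * h ^+ j).
  by move=> [|j]; [exact: low0 | exact: lowj].
pose T j := sh k (Q1`_j * h ^+ j).
have hT : \sum_(j < J) T j * z ^+ j = 0.
  have : tt K ^+ k * \sum_(j < J) T j * z ^+ j = 0.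
    rewrite -[RHS]hsum mulr_sumr; apply: eq_bigr => j _.
    by rewrite mulrA -lowkE.
  by move/eqP; rewrite mulf_eq0 (negbTE (ttX_neq0 _ _)) /= => /eqP.
have Bz : Bnd z.
apply: (core J1 hT).
- rewrite /T shE add0n expr1 mulrC ttXME ltnNge /k leq_addr /= addKn Q11; exact: G'm.
- move=> [|[|j]] // _; rewrite /T shE add0n.
  rewrite mulrC /h -exprM; apply: lowk_ttX.
  by rewrite /k /N; nia.
- move=> j _; apply: Bnd_sh; apply: Bnd_mul; last exact/Bnd_X/Bnd_X/Bnd_tt.
  by apply: BndPP; apply: (polyOverP hQ1).
rewrite ey; apply: Bnd_add; first exact: Bnd_tr.
by apply: Bnd_mul => //; apply/Bnd_X/Bnd_tt.
Qed.
End Hensel.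
Section Final.
Variable R : idomainType.
Local Notation K := {fraction R}.
Local Notation L := (laurent K).

Definition Fb (x : L) := exists u v : pser K, [/\ Bnd u, Bnd v, v != 0 & x = u%:F / v%:F].
Definition FP : {pred L} := fun x => pb (Fb x).
Lemma FPE x : (x \in FP) = pb (Fb x). Proof. by []. Qed.
Lemma FPI x : Fb x -> x \in FP. Proof. by move=> h; rewrite FPE; apply/pbP. Qed.
Lemma FPP x : x \in FP -> Fb x. Proof. by rewrite FPE => /pbP. Qed.

Lemma Bnd1 : Bnd (1 : pser K). Proof. by rewrite -cs1; apply: Bnd_cs. Qed.

Lemma FP_divring : divring_closed FP.
Proof.
split.
- apply: FPI; exists 1, 1; split. 1,2: by rewrite -cs1; apply: Bnd_cs. 1: exact: oner_neq0. by rewrite tofrac1 divr1.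
- move=> x y /FPP [u1 [v1 [hu1 hv1 nv1 ->]]] /FPP [u2 [v2 [hu2 hv2 nv2 ->]]].
  apply: FPI; exists (u1 * v2 - u2 * v1), (v1 * v2); split.
  + by apply: Bnd_add; [apply: Bnd_mul | apply/Bnd_opp/Bnd_mul].
  + exact: Bnd_mul.
  + by rewrite mulf_neq0.
  + have h1 : v1%:F != 0 :> L by rewrite tofrac_eq0.
    have h2 : v2%:F != 0 :> L by rewrite tofrac_eq0.
    rewrite tofracB !tofracM mulrBl invfM; congr (_ - _).
      by rewrite mulrACA (mulfV h2) mulr1.
    by rewrite [v1%:F^-1 * v2%:F^-1]mulrC mulrACA (mulfV h1) mulr1.
- move=> x y /FPP [u1 [v1 [hu1 hv1 nv1 ->]]] /FPP [u2 [v2 [hu2 hv2 nv2 ->]]].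
  have h1 : v1%:F != 0 :> L by rewrite tofrac_eq0.
  have h2 : v2%:F != 0 :> L by rewrite tofrac_eq0.
  have [->|nu2] := eqVneq u2 0.
    apply: FPI; exists 0, 1; split.
    + have -> : (0 : pser K) = cs 0 by apply: pserP => n; rewrite csE; case: (n == 0%N).
      by apply: Bnd_cs.
    + by rewrite -cs1; apply: Bnd_cs.
    + exact: oner_neq0.
    by rewrite !tofrac0 !mul0r invr0 mulr0.
  have h3 : u2%:F != 0 :> L by rewrite tofrac_eq0.
  apply: FPI; exists (u1 * v2), (v1 * u2); split.
  + exact: Bnd_mul.
  + exact: Bnd_mul.
  + by rewrite mulf_neq0.
  + by rewrite !tofracM invf_div invfM mulrACA.
Qed.
HB.instance Definition _ := GRing.isDivringClosed.Build L FP FP_divring.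

Lemma choice_R (F : nat -> K) : (forall n, inR (F n)) ->
  exists c : nat -> R, forall n, F n = (c n)%:F.
Proof.
move=> h; exists (fun n => proj1_sig (constructive_indefinite_description _ (h n))) => n.
exact: proj2_sig (constructive_indefinite_description _ (h n)).
Qed.

Lemma B_Bnd (f : pser K) : in_B f -> Bnd f.
Proof.
move=> [a [a0 [c hc]]]; exists 1, a; split; rewrite ?oner_eq0 // => n.
rewrite hc tofrac1 mul1r mulrC divfK ?expf_neq0 ?tofrac_eq0 //; exact: inRF.
Qed.

Lemma inF_Fb x : in_F x -> Fb x.
Proof.
by move=> [b1 [b2 [hb1 hb2 nb2 ->]]]; exists b1, b2; split => //; apply: B_Bnd.
Qed.

Lemma Bnd_inB (f : pser K) (d1 a1 d2 : R) : BndW d1 a1 f -> a1 != 0 ->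
  in_B (cs (d1 * d2)%:F * f).
Proof.
move=> h a10; exists a1; split => //.
have [c hc] := choice_R (fun n => inRM (inRF d2) (h n)).
exists c => n; rewrite csME -hc.
have aF : a1%:F ^+ n != 0 by rewrite expf_neq0 ?tofrac_eq0.
transitivity ((d1 * d2)%:F * f n * a1%:F ^+ n / a1%:F ^+ n); first by rewrite mulfK.
rewrite tofracM; ring.
Qed.

Lemma Fb_inF x : Fb x -> in_F x.
Proof.
move=> [u [v [[d1 [a1 [d10 a10 h1]]] [d2 [a2 [d20 a20 h2]]] nv ->]]].
have e0 : (d1 * d2)%:F != 0 :> K by rewrite tofrac_eq0 mulf_neq0.
have ce0 : cs (d1 * d2)%:F != 0.
  by apply/eqP => /(congr1 (fun f : pser K => f 0%N)); rewrite csE /= => /eqP; rewrite (negbTE e0).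
exists (cs (d1 * d2)%:F * u), (cs (d1 * d2)%:F * v); split.
- exact: (@Bnd_inB u d1 a1 d2 h1 a10).
- rewrite [d1 * d2]mulrC; exact: (@Bnd_inB v d2 a2 d1 h2 a20).
- by rewrite mulf_neq0.
- set E := cs (d1 * d2)%:F.
  have cF : E%:F != 0 :> L by rewrite tofrac_eq0.
  by rewrite !tofracM invfM mulrACA (mulfV cF) mul1r.
Qed.

Lemma clear_den (q : {poly L}) : q \is a polyOver FP ->
  exists (D : pser K) (P0 : {poly pser K}),
   [/\ Bnd D, D != 0, P0 \is a polyOver (@BndP R) & map_poly (@tofrac _) P0 = D%:F *: q].
Proof.
elim/poly_ind: q => [|p c IH] hq.
  exists 1, 0; split.
  - by rewrite -cs1; apply: Bnd_cs.
  - exact: oner_neq0.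
  - exact: polyOver0.
  - by rewrite map_poly0 scaler0.
have hp : p \is a polyOver FP.
  apply/polyOverP => i; have := polyOverP hq i.+1.
  by rewrite coefD coefMX coefC /= addr0.
have hc : c \in FP.
  by have := polyOverP hq 0%N; rewrite coefD coefMX coefC /= add0r.
have [D [P0 [hD nD hP0 hm]]] := IH hp.
have [u [v [hu hv nv ev]]] := FPP hc.
have hmi j : (P0`_j)%:F = D%:F * p`_j by rewrite -coef_map hm coefZ.
exists (D * v), (v *: P0 * 'X + (u * D)%:P); split.
- exact: Bnd_mul.
- by rewrite mulf_neq0.
- apply: rpredD; first apply: rpredM.
  + by apply: polyOverZ => //; apply: BndPI.
  + exact: polyOverX.
  + by rewrite polyOverC; apply: BndPI; apply: Bnd_mul.
- apply/polyP => i; rewrite coef_map /= !(coefD, coefMX, coefZ, coefC).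
  case: i => [|i] /=.
    rewrite !add0r ev !tofracM.
    have vF : v%:F != 0 :> L by rewrite tofrac_eq0.
    by rewrite mulrACA (mulfV vF) mulr1 mulrC.
  by rewrite !addr0 tofracM hmi tofracM mulrA [v%:F * _]mulrC.
Qed.

Lemma horner1' (T : nzRingType) (a : T) : (1 : {poly T}).[a] = 1.
Proof. by rewrite -polyC1 hornerC. Qed.
Lemma horner_tofrac (T : idomainType) (p : {poly T}) (a : T) :
  (map_poly (@tofrac T) p).[a%:F] = (p.[a])%:F.
Proof. exact: horner_map. Qed.
Lemma deriv_tofrac (T : idomainType) (p : {poly T}) :
  (map_poly (@tofrac T) p)^`() = map_poly (@tofrac T) (p^`()).
Proof. exact: deriv_map. Qed.

Lemma main_sec : separably_closed_in (@in_F R).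
Proof.
move=> x [p [hp hsep hroot]].
apply: Fb_inF.
have hpF : p \is a polyOver FP by apply/polyOverP => i; apply: FPI; apply: inF_Fb.
have hd : p^`().[x] != 0 by move: hsep; rewrite unlock => hs; exact: coprimep_root hs hroot.
have [u [v [nv ex]]] := frac_rep x.
have [k vk hkmin] := ex_minnP (pser_neq0 nv).
have lowv : lowk k v.
  by move=> n hn; apply/eqP/negPn/negP => /hkmin; rewrite leqNgt hn.
set w := sh k v.
have w0 : w 0%N != 0 by rewrite shE add0n.
have ev : v = tt K ^+ k * w := lowkE lowv.
set winv := pinvs w.
have hwinv : winv * w = 1 := pinvsK w0.
set y := u * winv.
set c : L := (tt K ^+ k)%:F.
have c0 : c != 0 by rewrite tofrac_eq0 ttX_neq0.
have cF : c \in FP.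
  apply: FPI; exists (tt K ^+ k), 1; split.
  - by apply/Bnd_X/Bnd_tt.
  - by rewrite -cs1; apply: Bnd_cs.
  - exact: oner_neq0.
  - by rewrite tofrac1 divr1.
have wn0 : w != 0 by apply: contraNneq w0 => ->.
have wF0 : w%:F != 0 :> L by rewrite tofrac_eq0.
have exy : x = c^-1 * y%:F.
  have hwi : winv%:F = (w%:F)^-1 :> L.
    have h1 : winv%:F * w%:F = 1 :> L by rewrite -tofracM hwinv tofrac1.
    by rewrite -[LHS]mulr1 -(mulfV wF0) mulrA h1 mul1r.
  rewrite ex ev /y /c !tofracM hwi invfM; by rewrite mulrCA.
set q := p \Po (c^-1 *: 'X).
have hqF : q \is a polyOver FP.
  by apply: polyOver_comp => //; apply: polyOverZ; [rewrite rpredV | exact: polyOverX].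
have hqy : q.[y%:F] = 0.
  by rewrite horner_comp hornerZ hornerX -exy; apply/eqP.
have hdq : q^`().[y%:F] != 0.
  rewrite /q deriv_comp derivZ derivX hornerM horner_comp !hornerZ hornerX -exy.
  rewrite horner1' mulr1; apply: mulf_neq0 hd _; by rewrite invr_eq0.
have [D [P0 [hD nD hP0 hmap]]] := clear_den hqF.
have hP0y : P0.[y] = 0.
  have h : (P0.[y])%:F = 0 :> L by rewrite -horner_tofrac hmap hornerZ hqy mulr0.
  by move/eqP: h; rewrite tofrac_eq0 => /eqP.
have hP0d : P0^`().[y] != 0.
  have h : (P0^`().[y])%:F = D%:F * q^`().[y%:F] :> L.
    by rewrite -horner_tofrac -deriv_tofrac hmap derivZ hornerZ.
  rewrite -tofrac_eq0 h; apply: mulf_neq0 _ hdq; by rewrite tofrac_eq0.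
have hBy : Bnd y := hensel hP0 hP0y hP0d.
apply: FPP; rewrite exy; apply: rpredM; first by rewrite rpredV.
apply: FPI; exists y, 1; split => //.
- by rewrite -cs1; apply: Bnd_cs.
- exact: oner_neq0.
- by rewrite tofrac1 divr1.
Qed.
End Final.

Unset Implicit Arguments.
Theorem proposition5p3 (R : idomainType) :
  separably_closed_in (@in_F R).
Proof. exact: main_sec. Qed.
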